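(* Let $R=\Bbbk[x_1,\dots,x_n]$ be a polynomial ring over a field $\Bbbk$, and let $I$ and $J$ be monomial ideals of $R$ such that every element of $G(I)$ has degree $d_1$ and every element of $G(J)$ has degree $d_2$. Let $k>1$ be an integer and let $m=\max\{i \mid x_i \text{ divides a minimal monomial generator of } I\}$. Suppose that $(x_1^{k-1},\dots,x_m^{k-1})\subseteq J$. Then the ordered pair $(I^{[k]},J)$ is conjoined.
   Context: All ideals are monomial ideals in $R$. For a monomial ideal $I$, $G(I)$ denotes its unique minimal set of monomial generators. $I^{[k]}$ is the ideal generated by $\{u^k : u\in G(I)\}$. An ordered pair $(I,J)$ of monomial ideals of $R$ is called conjoined if (i) $|G(IJ)|=|G(I)|\cdot|G(J)|$, and (ii) there is a minimal presentation $R^s\xrightarrow{\phi}R^t\xrightarrow{\psi}I\to 0$ of $I$ such that all entries of the matrix of $\phi$ belong to $J$. *)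

(* Defs.v *)
From mathcomp Require Import all_boot all_algebra.
From mathcomp Require Import mpoly.
Set Implicit Arguments. Unset Strict Implicit. Unset Printing Implicit Defensive.
Import GRing.Theory.
Local Open Scope ring_scope.

Section MonomialIdeals.
Variables (K : fieldType) (n : nat).
Local Notation R := {mpoly K[n]}.
Local Notation mon := 'X_{1..n}.

Definition ideal_pred := R -> Prop.

Definition mdivides (u v : mon) : bool := [forall i, u i <= v i]%N.

Definition monP (u : mon) : R := 'X_[u].

(** A monomial ideal is given by a finite list S of monomial generators;
    the ideal it denotes: all R-linear combinations of the x^u, u in S. *)
Definition mideal (S : seq mon) : ideal_pred :=
  fun p => exists c : 'I_(size S) -> R,
      p = \sum_(i < size S) c i * monP (nth 0%MM S i).

Definition Gmin (S : seq mon) : seq mon :=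
  undup [seq u <- S | ~~ has (fun v => mdivides v u && (v != u)) S].

Definition mprod (S T : seq mon) : seq mon :=
  [seq mnm_add u v | u <- S, v <- T].

(** I^[k] : generated by u^k for u in G(I). *)
Definition mfrob (k : nat) (S : seq mon) : seq mon :=
  [seq mnm_muln u k | u <- Gmin S].

(** Free presentations  R^s --A--> R^t --g--> I --> 0.
    psi sends the i-th basis vector of R^t to g 0 i; phi is the t x s matrix A. *)
Definition psi_onto (I : ideal_pred) t (g : 'rV[R]_t) : Prop :=
  forall p, I p <-> exists v : 'cV[R]_t, p = (g *m v) 0 0.

Definition image_is_kernel t s (g : 'rV[R]_t) (A : 'M[R]_(t, s)) : Prop :=
  forall v : 'cV[R]_t, g *m v = 0 <-> exists w : 'cV[R]_s, v = A *m w.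

Definition presentation (I : ideal_pred) t s (g : 'rV[R]_t) (A : 'M[R]_(t, s)) :=
  psi_onto I g /\ image_is_kernel g A.

Definition minimal_presentation (I : ideal_pred) t s (g : 'rV[R]_t)
    (A : 'M[R]_(t, s)) :=
  [/\ presentation I g A,
      (forall t' (g' : 'rV[R]_t'), psi_onto I g' -> (t <= t')%N) &
      (forall s' (A' : 'M[R]_(t, s')), image_is_kernel g A' -> (s <= s')%N)].

Definition conjoined (S T : seq mon) : Prop :=
  size (Gmin (mprod S T)) = (size (Gmin S) * size (Gmin T))%N /\
  exists t s (g : 'rV[R]_t) (A : 'M[R]_(t, s)),
    minimal_presentation (mideal S) g A /\
    forall i j, mideal T (A i j).

End MonomialIdeals.

(* Main.v *)
Require Import Defs.
From mathcomp Require Import all_boot all_algebra.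
From mathcomp Require Import mpoly.
Import GRing.Theory.
Local Open Scope ring_scope.
From mathcomp Require Import zify.
From Stdlib Require Import Classical.

Set Implicit Arguments. Unset Strict Implicit. Unset Printing Implicit Defensive.


Section Basics.
Variables (K : fieldType) (n : nat).
Local Notation R := {mpoly K[n]}.
Local Notation mon := 'X_{1..n}.

Lemma mcoeffXM (a b : mon) (p : R) :
  ('X_[a] * p)@_b = if (a <= b)%MM then p@_(b - a)%MM else 0.
Proof.
case: ifP => hab.
  have e : b = (a + (b - a))%MM by rewrite addmC (submK hab).
  by rewrite {1}e -commr_mpolyX mcoeffMX.
apply/eqP; rewrite -[_ == 0]negbK -mcoeff_msupp -commr_mpolyX.
rewrite (perm_mem (msuppMX p a)); apply/negP => /mapP [m' _ e].
by rewrite e lem_addr in hab.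
Qed.

Lemma mdeg_le (u v : mon) : (u <= v)%MM -> (mdeg u <= mdeg v)%N.
Proof. by move=> h; rewrite -(submK h) mdegD leq_addl. Qed.

Lemma mdeg_le_eq (u v : mon) : (u <= v)%MM -> mdeg u = mdeg v -> u = v.
Proof.
move=> h e; have := mdegD (v - u) u; rewrite (submK h) -e => /eqP.
rewrite -{1}[mdeg u]add0n eqn_add2r eq_sym mdeg_eq0 => /eqP z.
by rewrite -(submK h) z add0m.
Qed.

Lemma lem_anti (u v : mon) : (u <= v)%MM -> (v <= u)%MM -> u = v.
Proof.
move=> h1 h2; apply: (mdeg_le_eq h1); apply/eqP; rewrite eqn_leq.
by rewrite (mdeg_le h1) (mdeg_le h2).
Qed.

Lemma mnm_le_mdeg (v : mon) (i : 'I_n) : (v i <= mdeg v)%N.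
Proof. by rewrite mdegE (bigD1 i) //= leq_addr. Qed.

Lemma mpolyX_neq0 (a : mon) : ('X_[a] : R) != 0.
Proof. by rewrite -msupp_eq0 msuppX. Qed.

Lemma mulX_inj (a : mon) (p q : R) : 'X_[a] * p = 'X_[a] * q -> p = q.
Proof. by move/mulfI; apply; apply: mpolyX_neq0. Qed.

End Basics.


Section Homog.
Variables (K : fieldType) (n : nat).
Local Notation R := {mpoly K[n]}.
Local Notation mon := 'X_{1..n}.

Lemma submm (m : mon) : (m - m)%MM = 0%MM.
Proof. by apply/mnmP => i; rewrite mnmBE mnm0E subnn. Qed.

Definition hmg t s (w : 'I_t -> mon) (al : 'I_s -> mon) (B : 'M[R]_(t,s)) :=
  exists mu : 'I_t -> 'I_s -> K, forall i j, 'X_[w i] * B i j = mu i j *: 'X_[al j].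

Definition irred t s (B : 'M[R]_(t,s)) :=
  forall j, ~ exists d : 'cV[R]_s, d j 0 = 0 /\ col j B = B *m d.

Lemma hmg_P t s w al (B : 'M[R]_(t,s)) : hmg w al B -> irred B ->
  forall c : 'cV[R]_s, B *m c = 0 -> forall j, (c j 0)@_0 = 0.
Proof.
move=> [mu hB] hirr c hc j; apply/eqP; apply: contraT => hl.
exfalso; apply: (hirr j).
pose G j' := if (al j' <= al j)%MM then (c j' 0)@_(al j - al j') else 0.
pose lam := (c j 0)@_0.
pose d := \col_j' (if j' == j then 0 else (- lam^-1 * G j') *: ('X_[al j - al j'] : R)).
exists d; split; first by rewrite mxE eqxx.
apply/matrixP => i z; rewrite !mxE (ord1 z).
have H : \sum_j' mu i j' * G j' = ('X_[w i] * (B *m c) i 0)@_(al j).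
  rewrite mxE mulr_sumr raddf_sum /=.
  apply: eq_bigr => j' _; rewrite mulrA hB -scalerAl mcoeffZ mcoeffXM /G.
  by case: ifP; rewrite ?mulr0.
rewrite hc mxE mulr0 mcoeff0 in H.
have Gj : G j = lam by rewrite /G lepm_refl submm.
apply: (@mulX_inj _ _ (w i)); rewrite hB mulr_sumr.
rewrite (bigD1 j) //= mxE eqxx !mulr0 add0r.
have -> : \sum_(j' | j' != j) 'X_[w i] * (B i j' * d j' 0) =
     \sum_(j' | j' != j) (- lam^-1 * (mu i j' * G j')) *: 'X_[al j].
  apply: eq_bigr => j' /negbTE nj; rewrite mulrA hB mxE nj -scalerAl.
  rewrite -scalerAr scalerA.
  rewrite /G; case: ifP => hle; last by rewrite !mulr0 !scale0r.
  by rewrite -mpolyXD addmC (submK hle) mulrCA.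
rewrite -scaler_suml -mulr_sumr; congr (_ *: _).
move: H; rewrite (bigD1 j) //= Gj => /eqP; rewrite addrC addr_eq0 => /eqP ->.
by rewrite mulrN mulNr opprK mulrCA mulVf // mulr1.
Qed.

End Homog.


Section Count.
Variables (K : fieldType) (n : nat).
Local Notation R := {mpoly K[n]}.
Local Notation mon := 'X_{1..n}.

Lemma cols_to_mx t s s' (B : 'M[R]_(t,s)) (A : 'M[R]_(t,s')) :
  (forall j, exists z : 'cV[R]_s', col j B = A *m z) ->
  exists Z : 'M[R]_(s', s), B = A *m Z.
Proof.
move=> h; have [zf hz] := fin_all_exists h.
exists (\matrix_(k, j) zf j k 0); apply/matrixP => i j.
have := congr1 (fun M : 'cV[R]_t => M i 0) (hz j); rewrite !mxE => ->.
by apply: eq_bigr => k _; rewrite mxE.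
Qed.

Lemma count_le t s s' (B : 'M[R]_(t,s)) (A : 'M[R]_(t,s')) :
  (forall c : 'cV[R]_s, B *m c = 0 -> forall j, (c j 0)@_0 = 0) ->
  (forall j, exists z : 'cV[R]_s', col j B = A *m z) ->
  (forall j, exists y : 'cV[R]_s, col j A = B *m y) -> (s <= s')%N.
Proof.
move=> hP /cols_to_mx [Z hZ] /cols_to_mx [Y hY].
have E : B *m (1%:M - Y *m Z) = 0.
  by rewrite mulmxBr mulmx1 mulmxA -hY -hZ subrr.
have E2 : forall j j', ((1%:M - Y *m Z) j j')@_0 = 0.
  move=> j j'.
  have <- : (col j' (1%:M - Y *m Z)) j 0 = (1%:M - Y *m Z) j j' by rewrite mxE.
  apply: hP; apply/matrixP => a b.
  transitivity ((B *m (1%:M - Y *m Z)) a j'); last by rewrite E !mxE.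
  by rewrite !mxE; apply: eq_bigr => k _; rewrite !mxE.
have E3 : map_mx (mcoeff 0) Y *m map_mx (mcoeff 0) Z = 1%:M.
  rewrite -map_mxM; apply/matrixP => j j'; have H := E2 j j'.
  have H' : ((1%:M : 'M[R]_s) j j')@_0 = ((Y *m Z) j j')@_0.
    by apply/eqP; rewrite -subr_eq0 -mcoeffB; rewrite !mxE in H *; exact/eqP.
  transitivity (((Y *m Z) j j')@_0); first by rewrite mxE.
  rewrite -H' !mxE.
  by case: (j == j'); rewrite ?mcoeff1 ?mcoeff0 ?eqxx.
by rewrite -[s](mxrank1 K) -E3 mulmx_max_rank.
Qed.

End Count.


Section Prune.
Variables (K : fieldType) (n : nat).
Local Notation R := {mpoly K[n]}.
Local Notation mon := 'X_{1..n}.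

Definition span t N (C : 'M[R]_(t,N)) (v : 'cV[R]_t) := exists d, v = C *m d.

Lemma colsub_span t s N (f : 'I_s -> 'I_N) (C : 'M[R]_(t,N)) (d : 'cV[R]_s) :
  exists d' : 'cV[R]_N, colsub f C *m d = C *m d'.
Proof.
exists (\col_k \sum_(i | f i == k) d i 0); apply/matrixP => a b.
rewrite !mxE (ord1 b).
under [RHS]eq_bigr => k _ do rewrite mxE mulr_sumr.
rewrite (exchange_big_dep xpredT) //=; apply: eq_bigr => i _.
by rewrite (big_pred1 (f i)) ?mxE // => k; rewrite eq_sym.
Qed.

Lemma span_lift t N (C : 'M[R]_(t,N.+1)) j (d0 : 'cV[R]_N.+1) :
  d0 j 0 = 0 -> col j C = C *m d0 ->
  forall d : 'cV[R]_N.+1, exists d' : 'cV[R]_N, C *m d = colsub (lift j) C *m d'.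
Proof.
move=> h0 hc d.
exists (\col_k (d (lift j k) 0 + d j 0 * d0 (lift j k) 0)).
apply/matrixP => a b; rewrite !mxE (ord1 b).
have Ca : C a j = \sum_k C a (lift j k) * d0 (lift j k) 0.
  have := congr1 (fun M : 'cV[R]_t => M a 0) hc; rewrite !mxE => ->.
  by rewrite (bigD1_ord j) //= h0 mulr0 add0r.
rewrite (bigD1_ord j) //=.
under [RHS]eq_bigr => k _ do rewrite !mxE mulrDr.
rewrite big_split /= addrC; congr (_ + _).
rewrite Ca mulr_suml; apply: eq_bigr => k _.
by rewrite [d j 0 * _]mulrC mulrA.
Qed.

Lemma colsub_id t N (C : 'M[R]_(t,N)) : colsub (fun x => x) C = C.
Proof. by apply/matrixP => a b; rewrite mxE. Qed.

Lemma colsub_comp t N N' s (C : 'M[R]_(t,N)) (h : 'I_N' -> 'I_N) (f : 'I_s -> 'I_N') :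
  colsub (h \o f) C = colsub f (colsub h C).
Proof. by apply/matrixP => a b; rewrite !mxE. Qed.

Lemma prune t N (C : 'M[R]_(t,N)) : exists s (f : 'I_s -> 'I_N),
  irred (colsub f C) /\ forall v, span C v <-> span (colsub f C) v.
Proof.
elim: N C => [|N IH] C.
  exists 0%N, (fun x => x); rewrite colsub_id; split => //.
  by case=> m hm.
case: (classic (exists j (d : 'cV[R]_N.+1), d j 0 = 0 /\ col j C = C *m d)).
  move=> [j [d0 [h0 hc]]].
  have [s [f [irr spn]]] := IH (colsub (lift j) C).
  exists s, (lift j \o f); rewrite colsub_comp; split => // v; rewrite -spn.
  split; move=> [d ->].
    by have [d' ->] := span_lift h0 hc d; exists d'.
  by have [d' ->] := colsub_span (lift j) C d; exists d'.
move=> hn; exists N.+1, (fun x => x); rewrite colsub_id; split => //.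
by move=> j hj; apply: hn; exists j.
Qed.

Lemma col_delta t s (M : 'M[R]_(t,s)) j : col j M = M *m (\col_k (k == j)%:R).
Proof.
apply/matrixP => a b; rewrite !mxE (bigD1 j) //= big1 ?mxE ?eqxx ?mulr1 ?addr0 //.
by move=> k /negbTE nk; rewrite mxE nk mulr0.
Qed.

Lemma min_gen t N (g : 'rV[R]_t) (C : 'M[R]_(t,N)) w al :
  hmg w al C -> image_is_kernel g C ->
  exists s (f : 'I_s -> 'I_N), image_is_kernel g (colsub f C) /\
    forall s' (A' : 'M[R]_(t,s')), image_is_kernel g A' -> (s <= s')%N.
Proof.
move=> [mu hmu] hC.
have [s [f [irr spn]]] := prune C.
have hB : image_is_kernel g (colsub f C).
  by move=> v; rewrite hC; apply: spn.
exists s, f; split => // s' A' hA.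
apply: (count_le (B := colsub f C)).
- apply: (hmg_P (w := w) (al := al \o f)) => //.
  by exists (fun i j => mu i (f j)) => i j; rewrite mxE hmu.
- move=> j; apply/hA; apply/hB.
  by exists (\col_k (k == j)%:R); apply: col_delta.
- move=> j; apply/hB; apply/hA.
  by exists (\col_k (k == j)%:R); apply: col_delta.
Qed.

End Prune.


Section Taylor.
Variables (K : fieldType) (n : nat).
Local Notation R := {mpoly K[n]}.
Local Notation mon := 'X_{1..n}.

Lemma mulXsub (a b : mon) : (a <= b)%MM -> 'X_[a] * 'X_[b - a] = 'X_[b] :> R.
Proof. by move=> h; rewrite -mpolyXD addmC submK. Qed.

Lemma mnm_split (x L y : mon) : (x <= L)%MM -> (L <= y)%MM ->
  ((L - x) + (y - L))%MM = (y - x)%MM.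
Proof.
move=> /mnm_lepP h1 /mnm_lepP h2; apply/mnmP => i.
rewrite !(mnmDE, mnmBE); have := h1 i; have := h2 i; lia.
Qed.

Lemma addmKl (a g : mon) : ((a + g) - a)%MM = g.
Proof. by rewrite addmC addmK. Qed.

Variables (t : nat) (w : 'I_t -> mon).

Definition gX : 'rV[R]_t := \row_i 'X_[w i].
Definition lc a b := mlcm (w a) (w b).
Definition tay (a b i : 'I_t) : R :=
  (i == a)%:R * 'X_[lc a b - w a] - (i == b)%:R * 'X_[lc a b - w b].
Local Notation PT := ('I_t * 'I_t)%type.
Definition Ctay : 'M[R]_(t, #|{: PT}|) :=
  \matrix_(i, j) tay (enum_val j).1 (enum_val j).2 i.

Lemma tayX a b i : 'X_[w i] * tay a b i = ((i == a)%:R - (i == b)%:R : K) *: 'X_[lc a b].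
Proof.
rewrite /tay; case: (i =P a) => [->|_]; case: (_ =P b) => [->|_];
  rewrite ?mul1r ?mul0r ?subr0 ?sub0r ?subrr ?scale0r ?scaleN1r ?scale1r ?mulr0 ?mulrN
    ?mulXsub ?lem_mlcml ?lem_mlcmr //.
Qed.


Lemma sum_ind (T : pzRingType) (F : 'I_t -> T) j : \sum_a (j == a)%:R * F a = F j.
Proof.
rewrite (bigD1 j) //= eqxx mul1r big1 ?addr0 // => a.
by rewrite eq_sym => /negbTE ->; rewrite mul0r.
Qed.

Lemma sum_ind' (T : pzRingType) (F : 'I_t -> T) j : \sum_a (a == j)%:R * F a = F j.
Proof. by rewrite -(sum_ind F j); apply: eq_bigr => a _; rewrite eq_sym. Qed.

Lemma sum_ind1 (T : pzRingType) j : \sum_(a : 'I_t) ((a == j)%:R : T) = 1.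
Proof.
rewrite (bigD1 j) //= eqxx big1 ?addr0 // => a.
by move=> /negbTE ->.
Qed.

Lemma sum_ind1' (T : pzRingType) j : \sum_(a : 'I_t) ((j == a)%:R : T) = 1.
Proof.
rewrite (bigD1 j) //= eqxx big1 ?addr0 // => a.
by rewrite eq_sym => /negbTE ->.
Qed.

Lemma gX_Ctay : gX *m Ctay = 0.
Proof.
apply/matrixP => z j; rewrite !mxE.
under eq_bigr => i _ do rewrite !mxE tayX.
by rewrite -scaler_suml sumrB !sum_ind1 subrr scale0r.
Qed.

Lemma Ctay_ker : image_is_kernel gX Ctay.
Proof.
move=> v; split; last first.
  by move=> [d ->]; rewrite mulmxA gX_Ctay mul0mx.
move=> hv.
case: (posnP t) => [t0|tpos].
  exists 0; apply/matrixP => i; exfalso; have := ltn_ord i.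
  by rewrite [in X in (_ < X)%N]t0.
pose a0 := Ordinal tpos.
pose i0 (b : mon) := odflt a0 [pick i | (w i <= b)%MM].
have hi0 : forall i b, (w i <= b)%MM -> (w (i0 b) <= b)%MM.
  move=> i b h; rewrite /i0; case: pickP => [x hx|hn] //=.
  by rewrite hn in h.
pose D a b : R := \sum_(g <- msupp (v a 0))
   ((i0 (w a + g)%MM == b)%:R * (v a 0)@_g) *: 'X_[(w a + g) - lc a b].
exists (\col_j D (enum_val j).1 (enum_val j).2).
apply/matrixP => i z; rewrite (ord1 z) !mxE.
have -> : \sum_j Ctay i j * (\col_j0 D (enum_val j0).1 (enum_val j0).2) j 0 =
          \sum_(p in {: PT}) tay p.1 p.2 i * D p.1 p.2.
  by rewrite [RHS]big_enum_val; apply: eq_bigr => j _; rewrite !mxE.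
rewrite -(pair_big xpredT xpredT (fun a b => tay a b i * D a b)) /=.
pose F1 a b := 'X_[lc a b - w a] * D a b.
pose F2 a b := 'X_[lc a b - w b] * D a b.
have E1 : forall a b, tay a b i * D a b = (i == a)%:R * F1 a b - (i == b)%:R * F2 a b.
  by move=> a b; rewrite /tay /F1 /F2 mulrBl !mulrA.
under eq_bigr => a _ do (under eq_bigr => b _ do rewrite E1; rewrite sumrB).
rewrite sumrB.
have -> : \sum_a \sum_b (i == a)%:R * F1 a b = \sum_b F1 i b.
  by under eq_bigr => a _ do rewrite -mulr_sumr; rewrite sum_ind.
have -> : \sum_a \sum_b (i == b)%:R * F2 a b = \sum_a F2 a i.
  by apply: eq_bigr => a _; rewrite sum_ind.
have -> : \sum_b F1 i b = v i 0.
  have T : forall b g, 'X_[lc i b - w i] * (((i0 (w i + g)%MM == b)%:R * (v i 0)@_g) *: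
       'X_[(w i + g) - lc i b]) = ((i0 (w i + g)%MM == b)%:R * (v i 0)@_g) *: 'X_[g].
    move=> b g; rewrite -scalerAr; case: eqP => [<-|_]; last by rewrite !mul0r !scale0r.
    rewrite -mpolyXD mnm_split ?addmKl ?lem_mlcml // lem_mlcm lem_addr /=.
    by apply: hi0 (lem_addr _ _).
  rewrite /F1 /D.
  under eq_bigr => b _ do rewrite mulr_sumr.
  under eq_bigr => b _ do under eq_bigr => g _ do rewrite T.
  rewrite exchange_big /= [RHS]mpolyE; apply: eq_bigr => g _.
  by rewrite -scaler_suml -mulr_suml sum_ind1' mul1r.
suff -> : \sum_a F2 a i = 0 by rewrite subr0.
apply: (@mulX_inj _ _ (w i)); rewrite mulr0 mulr_sumr.
have T2 : forall a g, 'X_[w i] * ('X_[lc a i - w i] * (((i0 (w a + g)%MM == i)%:R *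
      (v a 0)@_g) *: 'X_[w a + g - lc a i])) =
      ((i0 (w a + g)%MM == i)%:R * (v a 0)@_g) *: 'X_[w a + g].
  move=> a g; case: eqP => [e|_]; last by rewrite !mul0r !scale0r !mulr0.
  have h1 : (w i <= w a + g)%MM by rewrite -e; apply: hi0 (lem_addr _ _).
  rewrite mulrA mulXsub ?lem_mlcmr // -scalerAr mulXsub //.
  by rewrite lem_mlcm lem_addr h1.
under eq_bigr => a _ do rewrite /F2 /D mulr_sumr mulr_sumr.
under eq_bigr => a _ do under eq_bigr => g _ do rewrite T2.
have Ca : forall a b, ('X_[w a] * v a 0)@_b =
    \sum_(g <- msupp (v a 0)) (v a 0)@_g * ((w a + g)%MM == b)%:R.
  move=> a b; rewrite {1}(mpolyE (v a 0)) mulr_sumr raddf_sum /=.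
  by apply: eq_bigr => g _; rewrite -scalerAr mcoeffZ -mpolyXD mcoeffX.
apply/mpolyP => b; rewrite mcoeff0 raddf_sum /=.
have hb : \sum_a ('X_[w a] * v a 0)@_b = 0.
  have := congr1 (fun M : 'rV[R]_1 => (M 0 0)@_b) hv; rewrite /= !mxE mcoeff0 raddf_sum.
  by move=> E; rewrite -[RHS]E; apply: eq_bigr => a _; rewrite mxE.
under eq_bigr => a _ do rewrite raddf_sum.
transitivity ((i0 b == i)%:R * \sum_a ('X_[w a] * v a 0)@_b); last by rewrite hb mulr0.
rewrite mulr_sumr; apply: eq_bigr => a _; rewrite Ca mulr_sumr; apply: eq_bigr => g _.
rewrite /= mcoeffZ mcoeffX; case: ((w a + g)%MM =P b) => [e|_]; last by rewrite !mulr0.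
by rewrite e !mulr1.
Qed.

End Taylor.


Section Gmin.
Variable (n : nat).
Local Notation mon := 'X_{1..n}.

Lemma mdivE (u v : mon) : mdivides u v = (u <= v)%MM.
Proof. by []. Qed.

Lemma mem_Gmin (S : seq mon) x :
  (x \in Gmin S) = (x \in S) && ~~ has (fun v => (v <= x)%MM && (v != x)) S.
Proof. by rewrite /Gmin mem_undup mem_filter andbC. Qed.

Lemma Gmin_uniq (S : seq mon) : uniq (Gmin S).
Proof. exact: undup_uniq. Qed.

Lemma Gmin_sub (S : seq mon) x : x \in Gmin S -> x \in S.
Proof. by rewrite mem_Gmin => /andP []. Qed.

Lemma Gmin_anti (S : seq mon) x y : x \in Gmin S -> y \in Gmin S -> (x <= y)%MM -> x = y.
Proof.
move=> /Gmin_sub hx; rewrite mem_Gmin => /andP [_ hn] hxy.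
apply/eqP; apply: contraNT hn => nxy; apply/hasP; exists x => //.
by rewrite hxy.
Qed.

Lemma Gmin_cover (S : seq mon) x : x \in S -> exists2 y, y \in Gmin S & (y <= x)%MM.
Proof.
move: {2}(mdeg x) (leqnn (mdeg x)) => d; elim: d x => [|d IH] x hd hx.
  case hg: (x \in Gmin S); first by exists x => //; apply: lepm_refl.
  move: hg; rewrite mem_Gmin hx /= => /negbFE /hasP [y hy /andP [hyx nyx]].
  have := mdeg_le hyx; have : mdeg y <> mdeg x by move/(mdeg_le_eq hyx)/eqP; rewrite (negbTE nyx).
  lia.
case hg: (x \in Gmin S); first by exists x => //; apply: lepm_refl.
move: hg; rewrite mem_Gmin hx /= => /negbFE /hasP [y hy /andP [hyx nyx]].
have hlt : (mdeg y <= d)%N.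
  have := mdeg_le hyx; have : mdeg y <> mdeg x by move/(mdeg_le_eq hyx)/eqP; rewrite (negbTE nyx).
  lia.
have [z hz hzy] := IH y hlt hy; exists z => //; exact: lepm_trans hzy hyx.
Qed.

Lemma Gmin_id (L : seq mon) : uniq L ->
  (forall x y, x \in L -> y \in L -> (x <= y)%MM -> x = y) -> Gmin L = L.
Proof.
move=> hu ha; rewrite /Gmin (undup_id (filter_uniq _ hu)).
apply/all_filterP/allP => x hx; apply/hasPn => y hy; apply/negP => /andP [hyx nyx].
by move: nyx; rewrite (ha _ _ hy hx hyx) eqxx.
Qed.

End Gmin.


Section Mideal.
Variables (K : fieldType) (n : nat).
Local Notation R := {mpoly K[n]}.
Local Notation mon := 'X_{1..n}.

Lemma mideal0 (T : seq mon) : mideal T (0 : R).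
Proof. by exists (fun _ => 0); rewrite big1 // => i _; rewrite mul0r. Qed.

Lemma midealB (T : seq mon) (p q : R) : mideal T p -> mideal T q -> mideal T (p - q).
Proof.
move=> [c ->] [d ->]; exists (fun i => c i - d i).
by rewrite -sumrB; apply: eq_bigr => i _; rewrite mulrBl.
Qed.

Lemma midealMl (T : seq mon) (p q : R) : mideal T p -> mideal T (q * p).
Proof.
move=> [c ->]; exists (fun i => q * c i).
by rewrite mulr_sumr; apply: eq_bigr => i _; rewrite mulrA.
Qed.

Lemma mideal_mon (T : seq mon) (e : mon) : mideal T ('X_[e] : R) ->
  exists2 t0, t0 \in T & (t0 <= e)%MM.
Proof.
move=> [c hc]; case: (boolP (has (fun t0 => (t0 <= e)%MM) T)).
  by move/hasP => [t0 h1 h2]; exists t0.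
move/hasPn => hn; exfalso.
have := congr1 (mcoeff e) hc; rewrite mcoeffX eqxx raddf_sum /= big1.
  by move/eqP; rewrite oner_eq0.
move=> i _; rewrite /monP mulrC mcoeffXM.
by rewrite (negbTE (hn _ (mem_nth 0%MM (ltn_ord i)))).
Qed.

End Mideal.


Section Cond1.
Variable (n : nat).
Local Notation mon := 'X_{1..n}.

Lemma lem_add2l (w v t : mon) : (v <= t)%MM -> (w + v <= w + t)%MM.
Proof.
move=> /mnm_lepP h; apply/mnm_lepP => i; rewrite !mnmDE leq_add2l; exact: h.
Qed.

Lemma cond1 (W T : seq mon) (D d2 : nat) :
  uniq W -> (forall x y, x \in W -> y \in W -> (x <= y)%MM -> x = y) ->
  (forall x, x \in W -> mdeg x = D) -> (forall v, v \in Gmin T -> mdeg v = d2) ->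
  (forall w1 w2 v1 v2, w1 \in W -> w2 \in W -> v1 \in Gmin T -> v2 \in Gmin T ->
     (w1 + v1 = w2 + v2)%MM -> w1 = w2 /\ v1 = v2) ->
  size (Gmin (mprod W T)) = (size (Gmin W) * size (Gmin T))%N.
Proof.
move=> hu ha hD hd2 hinj.
rewrite (Gmin_id hu ha) -(size_allpairs (fun u v => mnm_add u v)).
apply/perm_size/uniq_perm; first exact: Gmin_uniq.
  apply: allpairs_uniq => //; first exact: Gmin_uniq.
  move=> [w1 v1] [w2 v2] /allpairsP [[a1 b1] /= [h1 h2 [-> ->]]].
  move=> /allpairsP [[a2 b2] /= [h3 h4 [-> ->]]] /= e.
  by have [-> ->] := hinj _ _ _ _ h1 h3 h2 h4 e.
move=> x; apply/idP/idP.
  rewrite mem_Gmin => /andP [/allpairsP [[w1 t1] /= [h1 h2 ex]] hn].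
  have [v hv hvt] := Gmin_cover h2.
  case: (eqVneq (w1 + v)%MM x) => [e|ne].
    by apply/allpairsP; exists (w1, v); rewrite -e.
  exfalso; move/hasP: hn; apply; exists (w1 + v)%MM.
    by apply/allpairsP; exists (w1, v); split => //; apply: Gmin_sub.
  by rewrite ne ex lem_add2l.
move=> /allpairsP [[w1 v1] /= [h1 h2 ex]].
rewrite mem_Gmin; apply/andP; split.
  by apply/allpairsP; exists (w1, v1); split => //; apply: Gmin_sub.
apply/hasPn => y /allpairsP [[w2 t2] /= [h3 h4 ey]]; apply/negP => /andP [hyx nyx].
have [v2 hv2 hvt] := Gmin_cover h4.
have hle : (w2 + v2 <= x)%MM by apply: lepm_trans hyx; rewrite ey lem_add2l.
have ex' : (w2 + v2)%MM = x.
  by apply: mdeg_le_eq hle _; rewrite ex !mdegD (hD _ h1) (hD _ h3) (hd2 _ h2) (hd2 _ hv2).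
have : y = x.
  apply: lem_anti hyx _; rewrite -ex'; rewrite ey; exact: lem_add2l.
by move/eqP; rewrite (negbTE nyx).
Qed.

End Cond1.

Unset Implicit Arguments. Set Strict Implicit. Set Printing Implicit Defensive.


Theorem lemma2p5 (K : fieldType) (n : nat) (S T : seq 'X_{1..n})
    (d1 d2 k : nat) :
  (forall u, u \in Gmin S -> mdeg u = d1) ->
  (forall u, u \in Gmin T -> mdeg u = d2) ->
  (1 < k)%N ->
  (forall i : 'I_n,
     (exists (j : 'I_n) (u : 'X_{1..n}),
        (i <= j)%N /\ u \in Gmin S /\ (0 < u j)%N) ->
     mideal T ('X_i ^+ (k.-1) : {mpoly K[n]})) ->
  conjoined K (mfrob k S) T.
Proof.
move=> hd1 hd2 hk hJ.
have k0 : (0 < k)%N by apply: ltnW.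
set W := mfrob k S.
have memW : forall x, x \in W -> exists2 u, u \in Gmin S & x = (u *+ k)%MM.
  by move=> x /mapP [u hu ->]; exists u.
have hu : uniq W.
  rewrite map_inj_in_uniq ?Gmin_uniq // => u v _ _ e; apply/mnmP => i.
  have := congr1 (fun m : 'X_{1..n} => m i) e; rewrite /= !mulmnE => /eqP.
  by rewrite eqn_pmul2r // => /eqP.
have ha : forall x y, x \in W -> y \in W -> (x <= y)%MM -> x = y.
  move=> x y /memW [u hu' ->] /memW [v hv ->] /mnm_lepP h.
  have : (u <= v)%MM by apply/mnm_lepP => i; have := h i; rewrite !mulmnE leq_pmul2r.
  by move/(Gmin_anti hu' hv) ->.
have hD : forall x, x \in W -> mdeg x = (d1 * k)%N.
  by move=> x /memW [u hu' ->]; rewrite mdegMn hd1.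
split.
  apply: (cond1 hu ha hD hd2).
  move=> w1 w2 v1 v2 h1 h2 hv1 hv2 e.
  case: (boolP (all (fun x => x == 0%MM) W)) => [/allP hz | ].
    move: e; rewrite (eqP (hz _ h1)) (eqP (hz _ h2)) !add0m => ->; split => //.
  move=> /allPn [x hx nx0]; have [u hu' ex] := memW _ hx.
  have [j hj] : exists j, (0 < u j)%N.
    case: (pickP (fun j => (0 < u j)%N)) => [j hj|hn]; first by exists j.
    exfalso; move: nx0; rewrite ex; apply/negP/negPn/eqP/mnmP => i.
    rewrite mulmnE mnm0E; have := hn i; rewrite /= lt0n => /negbFE /eqP ->.
    by [].
  have := hJ j (ex_intro _ j (ex_intro _ u (conj (leqnn j) (conj hu' hj)))).
  rewrite mpolyXn => /mideal_mon [t0 ht0 hle].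
  have [v0 hv0 hv0t] := Gmin_cover ht0.
  have hd2k : (d2 <= k.-1)%N.
    rewrite -(hd2 _ hv0); apply: leq_trans (mdeg_le (lepm_trans hv0t hle)) _.
    by rewrite mdegMn mdeg1 mul1n.
  have bnd : forall v i, v \in Gmin T -> (v i < k)%N.
    move=> v i hv; apply: leq_ltn_trans (mnm_le_mdeg v i) _; rewrite hd2 //; lia.
  have [u1 hu1 e1] := memW _ h1; have [u2 hu2 e2] := memW _ h2.
  have ec : forall i, (u1 i * k + v1 i = u2 i * k + v2 i)%N.
    by move=> i; have := congr1 (fun m : 'X_{1..n} => m i) e; rewrite /= !mnmDE e1 e2 !mulmnE.
  have v12 : v1 = v2.
    apply/mnmP => i; have := congr1 (modn^~ k) (ec i).
    by rewrite /= !modnMDl !modn_small ?bnd.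
  split => //; apply: (@addIm _ v2); rewrite -[in LHS]v12; exact: e.
pose t := size W; pose w (i : 'I_t) := nth 0%MM W i.
have wW : forall i, w i \in W by move=> i; apply: mem_nth (ltn_ord i).
have winj : forall i j, (w i <= w j)%MM -> i = j.
  move=> i j h; have := ha _ _ (wW i) (wW j) h; move/eqP.
  by rewrite nth_uniq // => /eqP /val_inj.
have key : forall a b, a != b -> mideal T ('X_[mlcm (w a) (w b) - w a] : {mpoly K[n]}).
  move=> a b nab.
  have nle : ~~ (w b <= w a)%MM by apply: contra nab => /winj ->.
  have [j hj] : exists j, (w a j < w b j)%N.
    move: nle; rewrite /lem negb_forall => /existsP [j hj]; exists j; rewrite ltnNge.
    exact: hj.
  have [ub hub eb] := memW _ (wW b); have [ua hua ea] := memW _ (wW a).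
  rewrite ea eb !mulmnE in hj.
  have hab : (ua j < ub j)%N by rewrite -(ltn_pmul2r k0).
  have hubj : (0 < ub j)%N by apply: leq_ltn_trans hab.
  have := hJ j (ex_intro _ j (ex_intro _ ub (conj (leqnn j) (conj hub hubj)))).
  rewrite mpolyXn => hX.
  have hle : (U_(j) *+ k.-1 <= mlcm (w a) (w b) - w a)%MM.
    apply/mnm_lepP => i; rewrite mulmnE mnm1E mnmBE /mlcm mnmE.
    case: eqP => [<-|_]; last by rewrite mul0n.
    rewrite mul1n ea eb !mulmnE (maxn_idPr (ltnW hj)) -mulnBl.
    apply: leq_trans (leq_pred k) (leq_pmull _ _); by rewrite subn_gt0.
  by rewrite -(submK hle) mpolyXD; apply: midealMl.
have hC : hmg w (fun j => lc w (enum_val j).1 (enum_val j).2) (Ctay K w).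
  exists (fun i j => ((i == (enum_val j).1)%:R - (i == (enum_val j).2)%:R)).
  by move=> i j; rewrite mxE tayX.
have [s [f [hker hmin]]] := min_gen hC (Ctay_ker w).
exists t, s, (gX K w), (colsub f (Ctay K w)); split; last first.
  move=> i j; rewrite !mxE /tay.
  set a := (enum_val (f j)).1; set b := (enum_val (f j)).2.
  case: (eqVneq a b) => [<-|nab]; first by rewrite subrr; apply: mideal0.
  apply: midealB; apply: midealMl; first exact: key.
  by rewrite /lc mlcmC; apply: key; rewrite eq_sym.
split; [split|..] => //.
- move=> p; split.
    move=> [c ->]; exists (\col_i c i); rewrite !mxE; apply: eq_bigr => i _.
    by rewrite !mxE /monP mulrC.
  move=> [v ->]; exists (fun i => v i 0); rewrite !mxE; apply: eq_bigr => i _.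
  by rewrite !mxE /monP mulrC.
- move=> t' g' hg'.
  apply: (count_le (B := gX K w) (A := g')).
  + apply: (hmg_P (w := fun _ => 0%MM) (al := w)).
      by exists (fun _ _ => 1) => i j; rewrite mxE mpolyX0 mul1r scale1r.
    move=> j [d [hdj hcol]].
    have := congr1 (fun M : 'cV[{mpoly K[n]}]_1 => (M 0 0)@_(w j)) hcol.
    rewrite /= !mxE mcoeffX eqxx raddf_sum big1 ?oner_eq0 //.
      by move/eqP; rewrite oner_eq0.
    move=> i _; rewrite /= !mxE mcoeffXM; case: ifP => // h.
    by rewrite (winj _ _ h) hdj mcoeff0.
  + move=> j.
    have hm : mideal W ('X_[w j] : {mpoly K[n]}).
      exists (fun i => (i == j)%:R); rewrite (bigD1 j) //= eqxx mul1r big1 ?addr0 //.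
      by move=> i /negbTE ->; rewrite mul0r.
    have [v hv] := (hg' _).1 hm; exists v; apply/matrixP => a b.
    by rewrite (ord1 a) (ord1 b) mxE -hv mxE.
  + move=> j.
    have hm : mideal W (g' 0 j).
      apply/hg'; exists (\col_k (k == j)%:R); rewrite mxE (bigD1 j) //= mxE eqxx mulr1.
      by rewrite big1 ?addr0 // => i /negbTE ni; rewrite mxE ni mulr0.
    have [c hc] := hm; exists (\col_i c i); apply/matrixP => a b.
    rewrite (ord1 a) (ord1 b) !mxE hc; apply: eq_bigr => i _.
    by rewrite !mxE /monP mulrC.
Qed.
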